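(* For every annotated CQ $(q,E)$ in which $E=(\emptyset,E^-)$ consists of negative examples only, every $\preceq^{\mathrm{cod}}$-repair for $(q,E)$ is a $\preceq^{\mathrm{cod}}$-specialization for $(q,E)$.
   Context: Data examples are pairs $(I,\mathbf a)$ with $I$ a finite instance and $\mathbf a$ a $k$-tuple of its values. A $k$-ary CQ is $q(x_1,\dots,x_k)\text{ :- }\alpha_1,\dots,\alpha_n$ (relational atoms, no constants, each answer variable in some atom). $[\![q]\!]$ is the set of data examples $(I,\mathbf a)$ with $\mathbf a\in q(I)$; $\subseteq$ is query containment. $q$ fits $E=(E^+,E^-)$ iff $E^+\subseteq[\![q]\!]$ and $E^-\cap[\![q]\!]=\emptyset$. $q_1\preceq^{\mathrm{cod}}_q q_2$ iff $[\![q]\!]\oplus[\![q_1]\!]\subseteq[\![q]\!]\oplus[\![q_2]\!]$ ($\oplus$ symmetric difference), $\prec_q$ its strict part. A $\preceq^{\mathrm{cod}}$-repair for $(q,E)$ is a CQ $q'$ fitting $E$ such that no CQ $q''$ fitting $E$ has $q''\prec^{\mathrm{cod}}_q q'$. A $\preceq^{\mathrm{cod}}$-specialization for $(q,E)$ is a CQ $q'$ fitting $E$ with $q'\subseteq q$ such that no CQ $q''$ fitting $E$ with $q''\subseteq q$ has $q''\prec^{\mathrm{cod}}_q q'$. Candidate CQs use only relation symbols occurring in $q$ and $E$. *)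

(* Defs.v *)
From Stdlib Require Import List.
Import ListNotations.
Set Implicit Arguments.

Section CQs.
Variable S : Type.
Variable ar : S -> nat.

Definition fact := (S * list nat)%type.
Definition instance := list fact.
Definition example := (instance * list nat)%type.

Definition wf_instance (I : instance) : Prop :=
  forall R ts, In (R, ts) I -> length ts = ar R.

Definition adom (I : instance) (v : nat) : Prop :=
  exists R ts, In (R, ts) I /\ In v ts.

Definition wf_example (e : example) : Prop :=
  wf_instance (fst e) /\ forall v, In v (snd e) -> adom (fst e) v.

Record CQ := mkCQ { cq_ans : list nat; cq_atoms : list (S * list nat) }.

Definition wf_CQ (q : CQ) : Prop :=
  (forall R xs, In (R, xs) (cq_atoms q) -> length xs = ar R) /\
  (forall x, In x (cq_ans q) -> exists R xs, In (R, xs) (cq_atoms q) /\ In x xs).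

Definition arity (q : CQ) : nat := length (cq_ans q).

Definition answers (q : CQ) (I : instance) (a : list nat) : Prop :=
  exists h : nat -> nat,
    (forall R xs, In (R, xs) (cq_atoms q) -> In (R, map h xs) I) /\
    map h (cq_ans q) = a.

Definition denot (q : CQ) (e : example) : Prop :=
  wf_example e /\ length (snd e) = arity q /\ answers q (fst e) (snd e).

Definition contained (q1 q2 : CQ) : Prop :=
  forall e, denot q1 e -> denot q2 e.

Definition symdiff (q q1 : CQ) (e : example) : Prop :=
  (denot q e /\ ~ denot q1 e) \/ (~ denot q e /\ denot q1 e).

Definition cod_le (q q1 q2 : CQ) : Prop :=
  forall e, symdiff q q1 e -> symdiff q q2 e.

Definition cod_lt (q q1 q2 : CQ) : Prop :=
  cod_le q q1 q2 /\ ~ cod_le q q2 q1.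

Definition examples := (list example * list example)%type.

Definition fits (q : CQ) (E : examples) : Prop :=
  (forall e, In e (fst E) -> denot q e) /\
  (forall e, In e (snd E) -> ~ denot q e).

Definition sym_in_CQ (q : CQ) (R : S) : Prop :=
  exists xs, In (R, xs) (cq_atoms q).
Definition sym_in_examples (E : examples) (R : S) : Prop :=
  exists e ts, (In e (fst E) \/ In e (snd E)) /\ In (R, ts) (fst e).

Definition candidate (q : CQ) (E : examples) (q' : CQ) : Prop :=
  wf_CQ q' /\ arity q' = arity q /\
  forall R, sym_in_CQ q' R -> sym_in_CQ q R \/ sym_in_examples E R.

Definition cod_repair (q : CQ) (E : examples) (q' : CQ) : Prop :=
  candidate q E q' /\ fits q' E /\
  forall q'', candidate q E q'' -> fits q'' E -> ~ cod_lt q q'' q'.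

Definition cod_specialization (q : CQ) (E : examples) (q' : CQ) : Prop :=
  candidate q E q' /\ fits q' E /\ contained q' q /\
  forall q'', candidate q E q'' -> fits q'' E -> contained q'' q ->
              ~ cod_lt q q'' q'.

Definition annotated (q : CQ) (E : examples) : Prop :=
  wf_CQ q /\
  forall e, In e (fst E) \/ In e (snd E) ->
            wf_example e /\ length (snd e) = arity q.

End CQs.

(* Main.v *)
Require Import Defs.
From Stdlib Require Import List Classical Arith Lia.
Import ListNotations.

Fixpoint unif (ps : list (nat * nat)) : nat -> nat :=
  match ps with
  | [] => fun z => z
  | (u, v) :: ps' => let s := unif ps' in
      fun z => if Nat.eqb (s z) (s v) then s u else s z
  end.

Lemma unif_unifies ps : forall u v, In (u, v) ps -> unif ps u = unif ps v.
Proof.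
  induction ps as [|[a b] ps IH]; simpl; intros u v H; [contradiction|].
  destruct H as [H|H].
  - inversion H; subst. rewrite Nat.eqb_refl.
    destruct (Nat.eqb_spec (unif ps u) (unif ps v)); congruence.
  - rewrite (IH _ _ H). reflexivity.
Qed.

Lemma unif_mgu ps (h : nat -> nat) :
  (forall u v, In (u, v) ps -> h u = h v) -> forall z, h (unif ps z) = h z.
Proof.
  induction ps as [|[a b] ps IH]; simpl; intros Hh z; [reflexivity|].
  assert (IH' : forall z, h (unif ps z) = h z) by (apply IH; intros; apply Hh; auto).
  destruct (Nat.eqb_spec (unif ps z) (unif ps b)) as [E|E].
  - rewrite IH'. rewrite (Hh a b (or_introl eq_refl)).
    rewrite <- (IH' b), <- E, IH'. reflexivity.
  - apply IH'.
Qed.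

Lemma map_combine_eq (g : nat -> nat) : forall xs ys, length xs = length ys ->
  (forall u v, In (u, v) (combine xs ys) -> g u = g v) -> map g xs = map g ys.
Proof.
  induction xs as [|x xs IH]; destruct ys as [|y ys]; simpl; intros L H; try discriminate; auto.
  f_equal; auto.
Qed.

Definition dbl (x : nat) := 2 * x.
Definition odb (x : nat) := S (2 * x).

Definition sig_of {S} (q q' : CQ S) :=
  unif (combine (map dbl (cq_ans q)) (map odb (cq_ans q'))).

Definition cqconj {S} (q q' : CQ S) : CQ S :=
  let s := sig_of q q' in
  mkCQ (map s (map dbl (cq_ans q)))
       (map (fun p => (fst p, map s (snd p)))
            (map (fun p => (fst p, map dbl (snd p))) (cq_atoms q) ++
             map (fun p => (fst p, map odb (snd p))) (cq_atoms q'))).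

Lemma conj_ans {S} (q q' : CQ S) : length (cq_ans q) = length (cq_ans q') ->
  map (sig_of q q') (map dbl (cq_ans q)) = map (sig_of q q') (map odb (cq_ans q')).
Proof.
  intro L. apply map_combine_eq.
  - rewrite !length_map; auto.
  - intros u v H. apply unif_unifies. exact H.
Qed.

Lemma answers_conj_l {S} (q q' : CQ S) I a :
  length (cq_ans q) = length (cq_ans q') ->
  answers (cqconj q q') I a -> answers q I a /\ answers q' I a.
Proof.
  intros L [h [Hat Han]]. simpl in *.
  split.
  - exists (fun x => h (sig_of q q' (dbl x))). split.
    + intros R xs Hin.
      specialize (Hat R (map (sig_of q q') (map dbl xs))).
      rewrite !map_map in Hat. apply Hat.
      apply in_map_iff. exists (R, map dbl xs). split; [simpl; rewrite map_map; auto|].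
      apply in_or_app; left. apply in_map_iff. exists (R, xs); auto.
    + rewrite <- Han, !map_map. reflexivity.
  - exists (fun x => h (sig_of q q' (odb x))). split.
    + intros R xs Hin.
      specialize (Hat R (map (sig_of q q') (map odb xs))).
      rewrite !map_map in Hat. apply Hat.
      apply in_map_iff. exists (R, map odb xs). split; [simpl; rewrite map_map; auto|].
      apply in_or_app; right. apply in_map_iff. exists (R, xs); auto.
    + rewrite <- Han, conj_ans by exact L. rewrite !map_map. reflexivity.
Qed.

Lemma even_dbl x : Nat.even (dbl x) = true.
Proof. unfold dbl. rewrite Nat.even_mul. reflexivity. Qed.
Lemma even_odb x : Nat.even (odb x) = false.
Proof. unfold odb. rewrite Nat.even_succ, Nat.odd_mul. reflexivity. Qed.
Lemma div2_dbl x : Nat.div2 (dbl x) = x.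
Proof. unfold dbl. apply Nat.div2_double. Qed.
Lemma div2_odb x : Nat.div2 (odb x) = x.
Proof. unfold odb. apply Nat.div2_succ_double. Qed.

Lemma answers_conj_r {S} (q q' : CQ S) I a :
  answers q I a -> answers q' I a -> answers (cqconj q q') I a.
Proof.
  intros [h1 [H1 E1]] [h2 [H2 E2]].
  set (h := fun z => if Nat.even z then h1 (Nat.div2 z) else h2 (Nat.div2 z)).
  assert (Hd : forall x, h (dbl x) = h1 x).
  { intro x. unfold h. rewrite even_dbl, div2_dbl. reflexivity. }
  assert (Ho : forall x, h (odb x) = h2 x).
  { intro x. unfold h. rewrite even_odb, div2_odb. reflexivity. }
  assert (Hm : forall z, h (sig_of q q' z) = h z).
  { apply unif_mgu. intros u v Hin.
    assert (G : forall xs ys, map h1 xs = map h2 ys ->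
               In (u, v) (combine (map dbl xs) (map odb ys)) -> h u = h v).
    { induction xs as [|x xs IH]; destruct ys as [|y ys]; simpl; intros Eq Hi;
        try contradiction.
      injection Eq as Eq1 Eq2. destruct Hi as [Hi|Hi].
      - inversion Hi; subst. rewrite Hd, Ho. auto.
      - eauto. }
    eapply G; [|exact Hin]. congruence. }
  exists h. simpl. split.
  - intros R xs Hin.
    apply in_map_iff in Hin. destruct Hin as [[R0 zs] [Eq Hin]].
    simpl in Eq. injection Eq as <- <-. rewrite map_map.
    rewrite map_ext with (g := h) by exact Hm.
    apply in_app_or in Hin. destruct Hin as [Hin|Hin];
      apply in_map_iff in Hin; destruct Hin as [[R1 ws] [Eq Hin]];
      simpl in Eq; injection Eq as <- <-; rewrite map_map.
    + rewrite map_ext with (g := h1) by exact Hd. auto.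
    + rewrite map_ext with (g := h2) by exact Ho. auto.
  - rewrite map_map, map_ext with (g := h) by exact Hm.
    rewrite map_map, map_ext with (g := h1) by exact Hd. exact E1.
Qed.

Lemma denot_conj {S} (ar : S -> nat) (q q' : CQ S) e :
  length (cq_ans q) = length (cq_ans q') ->
  (denot ar (cqconj q q') e <-> denot ar q e /\ denot ar q' e).
Proof.
  intro L. unfold denot, arity. simpl. rewrite !length_map. split.
  - intros [W [Le A]]. apply answers_conj_l in A; [|exact L]. destruct A.
    split; (split; [exact W|split]); auto. congruence.
  - intros [[W [Le A]] [_ [_ A']]]. split; [exact W|split]; auto.
    apply answers_conj_r; auto.
Qed.

Theorem proposition21 :
  forall (S : Type) (ar : S -> nat) (q : CQ S) (Eneg : list (example S)),
    annotated ar q ([], Eneg) ->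
    forall q' : CQ S,
      cod_repair ar q ([], Eneg) q' ->
      cod_specialization ar q ([], Eneg) q'.
Proof.
  intros S ar q Eneg [[QA QB] _] q' [Cand [Fit Min]].
  assert (Cont : contained ar q' q).
  { apply NNPP. intro NC.
    destruct Cand as [[WA WB] [Ar Sy]].
    assert (L : length (cq_ans q) = length (cq_ans q')) by (unfold arity in Ar; auto).
    apply (Min (cqconj q q')).
    - split; [split|split].
      + intros R xs Hin. simpl in Hin. apply in_map_iff in Hin.
        destruct Hin as [[R0 zs] [Eq Hin]]. simpl in Eq. injection Eq as <- <-.
        rewrite length_map.
        apply in_app_or in Hin. destruct Hin as [Hin|Hin];
          apply in_map_iff in Hin; destruct Hin as [[R1 ws] [Eq Hin]];
          simpl in Eq; injection Eq as <- <-; rewrite length_map.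
        * auto.
        * auto.
      + intros x Hx. simpl in Hx. apply in_map_iff in Hx.
        destruct Hx as [z [<- Hz]]. apply in_map_iff in Hz.
        destruct Hz as [x0 [<- Hx0]].
        destruct (QB x0 Hx0) as [R [xs [Hin Hx]]].
        exists R, (map (sig_of q q') (map dbl xs)). split.
        * simpl. apply in_map_iff. exists (R, map dbl xs). split; [reflexivity|].
          apply in_or_app; left. apply in_map_iff. exists (R, xs). auto.
        * apply in_map, in_map, Hx.
      + unfold arity. simpl. rewrite !length_map. reflexivity.
      + intros R [xs Hin]. simpl in Hin. apply in_map_iff in Hin.
        destruct Hin as [[R0 zs] [Eq Hin]]. simpl in Eq. injection Eq as <- <-.
        apply in_app_or in Hin. destruct Hin as [Hin|Hin];
          apply in_map_iff in Hin; destruct Hin as [[R1 ws] [Eq Hin]];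
          simpl in Eq; injection Eq as <- <-.
        * left. exists ws. exact Hin.
        * apply Sy. exists ws. exact Hin.
    - split; [simpl; tauto|]. intros e He D.
      apply (denot_conj ar q q' e L) in D. apply (proj2 Fit e He). tauto.
    - split.
      + intros e [[D1 D2]|[D1 D2]].
        * left. split; [exact D1|]. intro D3. apply D2.
          apply (denot_conj ar q q' e L). tauto.
        * apply (denot_conj ar q q' e L) in D2. tauto.
      + intro Hle. apply NC. intros e De. apply NNPP. intro Dq.
        destruct (Hle e (or_intror (conj Dq De))) as [[D1 _]|[_ D2]].
        * tauto.
        * apply (denot_conj ar q q' e L) in D2. tauto. }
  split; [exact Cand|split; [exact Fit|split; [exact Cont|]]].
  intros q'' C F _. apply Min; auto.
Qed.
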